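(* Let $m\in\mathcal{P}(\mathcal{S})$ be such that $Q^d(m)$ is irreducible for all $d\in D^s$, and let $\mathcal{D}(m)=\{d_1,\dots,d_n\}$. For each $k$, let $x^{d_k}(m)$ be the unique $x\in\mathcal{P}(\mathcal{S})$ with $0=\sum_{i\in\mathcal{S}}\sum_{a\in\mathcal{A}}x_iQ_{ija}(m)(d_k)_{ia}$ for all $j\in\mathcal{S}$. Then $$\phi(m)=\operatorname{conv}\big(x^{d_1}(m),\dots,x^{d_n}(m)\big).$$
   Context: Setting: $\mathcal{S}=\{1,\dots,S\}$ ($S>1$), $\mathcal{A}=\{1,\dots,A\}$; for each $a$, $m$, $(Q_{ija}(m))_{i,j}$ is a conservative generator (off-diagonal $\ge 0$, zero row sums); $m\mapsto Q_{ija}(m)$ Lipschitz, $m\mapsto r_{ia}(m)$ continuous; $\beta\in(0,1)$. $\Pi^s$: stationary strategies (matrices $(\pi_{ia})$ with rows in $\mathcal{P}(\mathcal{A})$); $D^s$: deterministic stationary strategies, identified with maps $d:\mathcal{S}\to\mathcal{A}$ via $d_{ia}=\mathbf{1}[a=d(i)]$. $Q^\pi(m)_{ij}=\sum_aQ_{ija}(m)\pi_{ia}$. $V^\ast(m)$: value function of the continuous-time MDP with rates $Q_{ija}(m)$, rewards $r_{ia}(m)$, discount rate $\beta$. $O_i(m)=\operatorname{argmax}_{a}\{r_{ia}(m)+\sum_jQ_{ija}(m)V^\ast_j(m)\}$, $\mathcal{D}(m)=\{d:\mathcal{S}\to\mathcal{A}: d(i)\in O_i(m)\ \forall i\}$.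 Best-response map: $\phi(m)=\{x\in\mathcal{P}(\mathcal{S}):\exists\,\pi\in\operatorname{conv}(\mathcal{D}(m)),\ x^TQ^\pi(m)=0\}$. Irreducible: the directed graph with edges $i\to j$ ($i\ne j$) where the entry is positive is strongly connected. *)

(* Defs.v *)
From HB Require Import structures.
From mathcomp Require Import all_boot all_order all_algebra.
Set Implicit Arguments. Unset Strict Implicit. Unset Printing Implicit Defensive.
Import Order.TTheory GRing.Theory Num.Theory.
Local Open Scope ring_scope.

(* States are 'I_S, actions 'I_A.  Q a i j  stands for Q_{ija}. *)

Definition simplex {R : realFieldType} {n : nat} (x : 'rV[R]_n) : Prop :=
  (forall i, 0 <= x 0 i) /\ \sum_i x 0 i = 1.

Definition generator {R : realFieldType} {n : nat} (M : 'M[R]_n) : Prop :=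
  (forall i j, i != j -> 0 <= M i j) /\ (forall i, \sum_j M i j = 0).

Definition irreducible {R : realFieldType} {n : nat} (M : 'M[R]_n) : Prop :=
  forall i j : 'I_n, connect [rel k l | (k != l) && (0 < M k l)] i j.

Definition stat_strategy {R : realFieldType} {S A : nat} (pi : 'M[R]_(S, A)) : Prop :=
  forall i, simplex (row i pi).

Definition det_mx {R : realFieldType} {S A : nat} (d : {ffun 'I_S -> 'I_A}) : 'M[R]_(S, A) :=
  \matrix_(i, a) (a == d i)%:R.

Definition Qpol {R : realFieldType} {S A : nat} (Q : 'I_A -> 'M[R]_S) (pi : 'M[R]_(S, A))
  : 'M[R]_S := \matrix_(i, j) \sum_a Q a i j * pi i a.

Definition rpol {R : realFieldType} {S A : nat} (r : 'I_S -> 'I_A -> R) (pi : 'M[R]_(S, A))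
  : 'cV[R]_S := \col_i \sum_a r i a * pi i a.

(* expected discounted reward of the stationary strategy pi:
   E int_0^oo e^{-beta t} r(X_t) dt = (beta I - Q^pi)^{-1} r^pi *)
Definition Vpol {R : realFieldType} {S A : nat} (beta : R) (Q : 'I_A -> 'M[R]_S)
  (r : 'I_S -> 'I_A -> R) (pi : 'M[R]_(S, A)) : 'cV[R]_S :=
  invmx (beta%:M - Qpol Q pi) *m rpol r pi.

Definition is_value_fn {R : realFieldType} {S A : nat} (beta : R) (Q : 'I_A -> 'M[R]_S)
  (r : 'I_S -> 'I_A -> R) (V : 'cV[R]_S) : Prop :=
  forall i,
    (forall pi : 'M[R]_(S, A), stat_strategy pi -> Vpol beta Q r pi i 0 <= V i 0) /\
    (forall eps, 0 < eps -> exists pi : 'M[R]_(S, A),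
        stat_strategy pi /\ V i 0 - eps < Vpol beta Q r pi i 0).

Definition opt_action {R : realFieldType} {S A : nat} (Q : 'I_A -> 'M[R]_S)
  (r : 'I_S -> 'I_A -> R) (V : 'cV[R]_S) (i : 'I_S) (a : 'I_A) : bool :=
  [forall b, r i b + \sum_j Q b i j * V j 0 <= r i a + \sum_j Q a i j * V j 0].

Definition opt_dets {R : realFieldType} {S A : nat} (Q : 'I_A -> 'M[R]_S)
  (r : 'I_S -> 'I_A -> R) (V : 'cV[R]_S) : {set {ffun 'I_S -> 'I_A}} :=
  [set d : {ffun 'I_S -> 'I_A} | [forall i, opt_action Q r V i (d i)]].

Definition in_conv_pol {R : realFieldType} {S A : nat} (D : {set {ffun 'I_S -> 'I_A}})
  (pi : 'M[R]_(S, A)) : Prop :=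
  exists c : {ffun {ffun 'I_S -> 'I_A} -> R},
    (forall d, 0 <= c d) /\ \sum_(d in D) c d = 1 /\
    pi = \sum_(d in D) c d *: det_mx d.

Definition best_response {R : realFieldType} {S A : nat} (Q : 'I_A -> 'M[R]_S)
  (r : 'I_S -> 'I_A -> R) (V : 'cV[R]_S) (x : 'rV[R]_S) : Prop :=
  simplex x /\ exists pi, in_conv_pol (opt_dets Q r V) pi /\ x *m Qpol Q pi = 0.

Definition stat_dist {R : realFieldType} {S A : nat} (Q : 'I_A -> 'M[R]_S)
  (d : {ffun 'I_S -> 'I_A}) (x : 'rV[R]_S) : Prop :=
  simplex x /\ x *m Qpol Q (det_mx d) = 0.

(* Main.v *)
Require Import Defs.
From HB Require Import structures.
From mathcomp Require Import all_boot all_order all_algebra.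
Import Order.TTheory GRing.Theory Num.Theory.
Local Open Scope ring_scope.

Lemma edge_pos (R : realFieldType) (n : nat) (M : 'M[R]_n) (x : 'rV[R]_n) :
  generator M -> (forall i, 0 <= x 0 i) -> x *m M = 0 ->
  forall i j, i != j -> 0 < M i j -> 0 < x 0 i -> 0 < x 0 j.
Proof.
move=> [Hoff _] Hx HxM i j Hij HM Hi.
rewrite lt_def Hx andbT; apply/negP => /eqP Hj0.
have : (x *m M) 0 j = 0 by rewrite HxM mxE.
rewrite mxE (bigD1 j) //= Hj0 mul0r add0r => /eqP.
rewrite psumr_eq0; last by move=> k Hk; rewrite mulr_ge0 // Hoff.
move/allP => H.
have := H i (mem_index_enum _); rewrite Hij /=.
by rewrite mulf_eq0 !gt_eqF.
Qed.

Lemma stat_pos (R : realFieldType) (n : nat) (M : 'M[R]_n) (x : 'rV[R]_n) :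
  generator M -> irreducible M -> (forall i, 0 <= x 0 i) -> x *m M = 0 ->
  forall k, 0 < x 0 k -> forall i, 0 < x 0 i.
Proof.
move=> Hg Hirr Hx HxM k Hk i.
have /connectP [p Hp ->] := Hirr k i.
elim: p k Hk Hp => [|z p IH] k Hk //= /andP [/andP [Hkz HM] Hp].
exact: (IH z (@edge_pos _ _ M x Hg Hx HxM k z Hkz HM Hk) Hp).
Qed.

Lemma stat_uniq (R : realFieldType) (n : nat) (M : 'M[R]_n) (x y : 'rV[R]_n) :
  generator M -> irreducible M -> simplex x -> simplex y ->
  x *m M = 0 -> y *m M = 0 -> x = y.
Proof.
move=> Hg Hirr [Hx Sx] [Hy Sy] HxM HyM.
case: n M x y Hg Hirr Hx Sx Hy Sy HxM HyM => [|n] M x y Hg Hirr Hx Sx Hy Sy HxM HyM.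
  by move: Sx; rewrite big_ord0 => /eqP; rewrite eq_sym oner_eq0.
have Hyp : forall i, 0 < y 0 i.
  case: (pickP (fun k => 0 < y 0 k)) => [k Hk|H].
    exact: (@stat_pos _ _ M y Hg Hirr Hy HyM k Hk).
  have : \sum_i y 0 i <= 0.
    by rewrite sumr_le0 // => i _; rewrite leNgt H.
  by rewrite Sy ler10.
case: (@arg_minP _ _ _ ord0 xpredT (fun i => x 0 i / y 0 i)) => // k _ Hmin.
set t := x 0 k / y 0 k.
set w := x - t *: y.
have Hw : forall i, 0 <= w 0 i.
  move=> i; rewrite !mxE subr_ge0 -ler_pdivlMr //; exact: Hmin.
have HwM : w *m M = 0 by rewrite mulmxBl -scalemxAl HxM HyM scaler0 subr0.
have Hwk : w 0 k = 0 by rewrite !mxE /t divfK ?subrr // gt_eqF.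
have Hw0 : forall i, w 0 i = 0.
  move=> i; apply/eqP; case: (boolP (w 0 i == 0)) => // Hi.
  have Hi' : 0 < w 0 i by rewrite lt_def Hi Hw.
  by have := @stat_pos _ _ M w Hg Hirr Hw HwM i Hi' k; rewrite Hwk ltxx.
have Hxy : x = t *: y.
  apply/rowP => i; apply/eqP; rewrite -subr_eq0; move: (Hw0 i).
  by rewrite !mxE => ->.
have Ht : t = 1.
  move: Sx; rewrite Hxy (eq_bigr (fun i => t * y 0 i)); last by move=> i _; rewrite mxE.
  by rewrite -mulr_sumr Sy mulr1.
  by rewrite Hxy Ht scale1r.
Qed.

Lemma gen_diag_le0 (R : realFieldType) (n : nat) (M : 'M[R]_n) :
  generator M -> forall j, M j j <= 0.
Proof.
move=> [Hoff Hs] j.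
have := Hs j; rewrite (bigD1 j) //= => /eqP; rewrite addr_eq0 => /eqP ->.
by rewrite oppr_le0 sumr_ge0 // => k Hk; apply: Hoff; rewrite eq_sym.
Qed.

Lemma stat_exists (R : realFieldType) (n : nat) (M : 'M[R]_n) :
  (0 < n)%N -> generator M -> exists x, simplex x /\ x *m M = 0.
Proof.
move=> Hn Hg; have [Hoff Hs] := Hg.
have Hdet : \det M = 0.
  rewrite -det_tr; apply/eqP/det0P; exists (const_mx 1).
    apply/eqP => /rowP /(_ (Ordinal Hn)); rewrite !mxE => /eqP; by rewrite oner_eq0.
  apply/rowP => j; rewrite mxE [RHS]mxE -[X in _ = X](Hs j); apply: eq_bigr => i _.
  by rewrite !mxE mul1r.
have [v Hv0 HvM] : exists2 v : 'rV[R]_n, v != 0 & v *m M = 0.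
  by apply/det0P; rewrite Hdet.
pose u := \row_i `|v 0 i|.
have Hu : forall j, 0 <= (u *m M) 0 j.
  move=> j; rewrite mxE (bigD1 j) //= mxE.
  have Hvj : (v *m M) 0 j = 0 by rewrite HvM mxE.
  move: Hvj; rewrite mxE (bigD1 j) //= => /eqP; rewrite addr_eq0 => /eqP Heq.
  have H1 : `|v 0 j * M j j| <= \sum_(i < n | i != j) u 0 i * M i j.
    rewrite Heq normrN; apply: le_trans (ler_norm_sum _ _ _) _.
    apply: ler_sum => i Hi; rewrite !mxE normrM (ger0_norm (Hoff _ _ Hi)) //.
  have H2 : `|v 0 j * M j j| = - (u 0 j * M j j).
    by rewrite mxE normrM (ler0_norm (@gen_diag_le0 _ _ M Hg j)) mulrN.
  by rewrite H2 mxE lerNl -subr_ge0 opprK in H1.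
have Hsum : \sum_j (u *m M) 0 j = 0.
  rewrite (eq_bigr (fun j => \sum_i u 0 i * M i j)); last by move=> j _; rewrite mxE.
  rewrite exchange_big /= big1 // => i _; by rewrite -mulr_sumr Hs mulr0.
have HuM : u *m M = 0.
  apply/rowP => j; rewrite [RHS]mxE; move/eqP: Hsum; rewrite psumr_eq0; last by move=> k _; exact: Hu.
  by move/allP/(_ j (mem_index_enum _)); rewrite ?implyTb => /eqP.
have Hspos : 0 < \sum_i u 0 i.
  rewrite lt_def; apply/andP; split.
  - rewrite psumr_eq0; last by move=> i _; rewrite mxE.
    apply/negP => /allP H; apply/negP: Hv0; rewrite negbK; apply/eqP/rowP => i.
    by have := H i (mem_index_enum _); rewrite mxE normr_eq0 /= => /eqP ->; rewrite mxE.
  - by apply: sumr_ge0 => i _; rewrite mxE.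
exists ((\sum_i u 0 i)^-1 *: u); split; last by rewrite -scalemxAl HuM scaler0.
split.
  by move=> i; rewrite !mxE mulr_ge0 // invr_ge0 ltW.
rewrite (eq_bigr (fun i => (\sum_i u 0 i)^-1 * u 0 i)); last by move=> i _; rewrite mxE.
by rewrite -mulr_sumr mulVf // gt_eqF.
Qed.

Lemma Qpol_det (R : realFieldType) (n A : nat) (Q : 'I_A -> 'M[R]_n)
  (d : {ffun 'I_n -> 'I_A}) k l : Qpol Q (det_mx d) k l = Q (d k) k l.
Proof.
rewrite mxE (bigD1 (d k)) //= mxE eqxx mulr1 big1 ?addr0 // => a Ha.
by rewrite mxE (negbTE Ha) mulr0.
Qed.

Lemma Qpol_gen (R : realFieldType) (n A : nat) (Q : 'I_A -> 'M[R]_n)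
  (pi : 'M[R]_(n, A)) :
  (forall a, generator (Q a)) -> (forall i a, 0 <= pi i a) -> generator (Qpol Q pi).
Proof.
move=> Hg Hpi; split.
  move=> i j Hij; rewrite mxE sumr_ge0 // => a _.
  by rewrite mulr_ge0 //; case: (Hg a) => H _; exact: H.
move=> i; rewrite (eq_bigr (fun j => \sum_a Q a i j * pi i a)); last by move=> j _; rewrite mxE.
rewrite exchange_big big1 //= => a _; rewrite -mulr_suml.
by case: (Hg a) => _ ->; rewrite mul0r.
Qed.

Lemma Qpol_irr (R : realFieldType) (n A : nat) (Q : 'I_A -> 'M[R]_n)
  (pi : 'M[R]_(n, A)) :
  (forall a, generator (Q a)) -> (forall d, irreducible (Qpol Q (det_mx d))) ->
  (forall i a, 0 <= pi i a) -> (forall i, exists a, 0 < pi i a) ->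
  irreducible (Qpol Q pi).
Proof.
move=> Hg Hirr Hpi Hex i j.
have [f Hf] := fin_all_exists Hex.
pose d := [ffun k => f k].
apply: connect_sub (Hirr d i j) => k l /andP [Hkl HM]; apply: connect1.
rewrite /= Hkl /=; rewrite Qpol_det ffunE in HM.
rewrite mxE (bigD1 (f k)) //= -[X in X < _](addr0 0) ltr_leD //; first by rewrite mulr_gt0.
rewrite sumr_ge0 // => a _; rewrite mulr_ge0 //.
by case: (Hg a) => H _; exact: H.
Qed.

Lemma prod_sum (R : realFieldType) (n A : nat) (O : 'I_n -> 'I_A -> bool)
  (G : 'I_n -> 'I_A -> R) : (forall i a, ~~ O i a -> G i a = 0) ->
  \sum_(d in [set d : {ffun 'I_n -> 'I_A} | [forall i, O i (d i)]]) \prod_i G i (d i)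
  = \prod_i \sum_a G i a.
Proof.
move=> HG.
transitivity (\prod_i \sum_(a | O i a) G i a); last first.
  apply: eq_bigr => i _; rewrite big_mkcond /=; apply: eq_bigr => a _.
  by case: (boolP (O i a)) => // H; rewrite HG.
rewrite (bigA_distr_big_dep O G); apply: eq_bigl => d.
by rewrite inE; apply/forallP/familyP => H i; have := H i.
Qed.

Lemma conv_prod (R : realFieldType) (n A : nat) (O : 'I_n -> 'I_A -> bool)
  (pi : 'M[R]_(n, A)) :
  (forall i a, 0 <= pi i a) -> (forall i, \sum_a pi i a = 1) ->
  (forall i a, 0 < pi i a -> O i a) ->
  in_conv_pol [set d : {ffun 'I_n -> 'I_A} | [forall i, O i (d i)]] pi.
Proof.
move=> H0 H1 HO.
have Hz : forall i a, ~~ O i a -> pi i a = 0.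
  move=> i a Ha; apply/eqP; case: (boolP (pi i a == 0)) => // Hne.
  by have := HO i a; rewrite lt_def Hne H0 => /(_ isT); rewrite (negbTE Ha).
exists [ffun d : {ffun 'I_n -> 'I_A} => \prod_i pi i (d i)]; split; [|split].
- by move=> d; rewrite ffunE prodr_ge0.
- rewrite (eq_bigr (fun d : {ffun 'I_n -> 'I_A} => \prod_i pi i (d i))); last by move=> d _; rewrite ffunE.
  by rewrite prod_sum // big1 // => i _.
apply/matrixP => i0 a0; rewrite summxE.
pose G i b := pi i b * (if i == i0 then (a0 == b)%:R else 1).
rewrite (eq_bigr (fun d : {ffun 'I_n -> 'I_A} => \prod_i G i (d i))); last first.
  move=> d _; rewrite !mxE ffunE /G big_split /=; congr (_ * _).
  by rewrite -big_mkcond /= big_pred1_eq.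
rewrite prod_sum; last by move=> i a Ha; rewrite /G Hz // mul0r.
rewrite (bigD1 i0) //= [X in _ * X]big1 ?mulr1; last first.
  move=> i Hi; rewrite /G (negbTE Hi) -[RHS](H1 i); apply: eq_bigr => a _.
  by rewrite mulr1.
rewrite /G eqxx (bigD1 a0) //= eqxx mulr1 big1 ?addr0 // => a Ha.
by rewrite eq_sym (negbTE Ha) mulr0.
Qed.

Lemma simplex_pos (R : realFieldType) (n : nat) (x : 'rV[R]_n) :
  simplex x -> exists k, 0 < x 0 k.
Proof.
move=> [Hx Sx]; case: (pickP (fun k => 0 < x 0 k)) => [k Hk|H]; first by exists k.
have : \sum_i x 0 i <= 0 by rewrite sumr_le0 // => i _; rewrite leNgt H.
by rewrite Sx ler10.
Qed.

Lemma row_pos (R : realFieldType) (n A : nat) (pi : 'M[R]_(n, A)) :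
  (forall i a, 0 <= pi i a) -> (forall i, \sum_a pi i a = 1) ->
  forall i, exists a, 0 < pi i a.
Proof.
move=> H0 H1 i; case: (pickP (fun a => 0 < pi i a)) => [a Ha|H]; first by exists a.
have : \sum_a pi i a <= 0 by rewrite sumr_le0 // => a _; rewrite leNgt H.
by rewrite H1 ler10.
Qed.

Lemma stat_pos_simplex (R : realFieldType) (n : nat) (M : 'M[R]_n) (x : 'rV[R]_n) :
  generator M -> irreducible M -> simplex x -> x *m M = 0 -> forall i, 0 < x 0 i.
Proof.
move=> Hg Hirr Hs HxM; have [k Hk] := @simplex_pos _ _ x Hs.
exact: (@stat_pos _ _ M x Hg Hirr (proj1 Hs) HxM k Hk).
Qed.

Lemma conv_good (R : realFieldType) (n A : nat) (O : 'I_n -> 'I_A -> bool)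
  (pi : 'M[R]_(n, A)) :
  in_conv_pol [set d : {ffun 'I_n -> 'I_A} | [forall i, O i (d i)]] pi ->
  (forall i a, 0 <= pi i a) /\ (forall i, \sum_a pi i a = 1) /\
  (forall i a, 0 < pi i a -> O i a).
Proof.
move=> [c [Hc [Hs ->]]].
have E : forall i a, (\sum_(d in [set d : {ffun 'I_n -> 'I_A} | [forall i, O i (d i)]]) c d *: det_mx d) i a
   = \sum_(d in [set d : {ffun 'I_n -> 'I_A} | [forall i, O i (d i)]]) c d * (a == d i)%:R.
  by move=> i a; rewrite summxE; apply: eq_bigr => d _; rewrite !mxE.
split; [|split].
- by move=> i a; rewrite E sumr_ge0 // => d _; rewrite mulr_ge0.
- move=> i; rewrite (eq_bigr _ (fun a _ => E i a)) exchange_big /= -[RHS]Hs.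
  apply: eq_bigr => d _; rewrite -mulr_sumr (bigD1 (d i)) //= eqxx big1 ?addr0 ?mulr1 //.
  by move=> a Ha; rewrite (negbTE Ha).
- move=> i a; rewrite E; case: (boolP (O i a)) => // Ha.
  rewrite big1 ?ltxx // => d; rewrite inE => /forallP /(_ i) Hd.
  by case: eqP => [E'|]; [rewrite E' Hd in Ha | rewrite mulr0].
Qed.

Definition Conv (R : realFieldType) (n A : nat) (D : {set {ffun 'I_n -> 'I_A}})
  (y0 : {ffun {ffun 'I_n -> 'I_A} -> 'rV[R]_n}) (x : 'rV[R]_n) : Prop :=
  exists c : {ffun {ffun 'I_n -> 'I_A} -> R},
    (forall d, 0 <= c d) /\ \sum_(d in D) c d = 1 /\ x = \sum_(d in D) c d *: y0 d.
Arguments Conv {R n A}.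

Lemma conv_y0 (R : realFieldType) (n A : nat) (D : {set {ffun 'I_n -> 'I_A}})
  (y0 : {ffun {ffun 'I_n -> 'I_A} -> 'rV[R]_n}) d :
  d \in D -> Conv D y0 (y0 d).
Proof.
move=> Hd; exists [ffun e => (e == d)%:R]; split; [|split].
- by move=> e; rewrite ffunE ler0n.
- rewrite (bigD1 d) //= ffunE eqxx big1 ?addr0 // => e /andP [_ He].
  by rewrite ffunE (negbTE He).
- rewrite (bigD1 d) //= ffunE eqxx scale1r big1 ?addr0 // => e /andP [_ He].
  by rewrite ffunE (negbTE He) scale0r.
Qed.

Lemma conv_comb (R : realFieldType) (n A : nat) (D : {set {ffun 'I_n -> 'I_A}})
  (y0 : {ffun {ffun 'I_n -> 'I_A} -> 'rV[R]_n}) (lam : 'I_A -> R) (z : 'I_A -> 'rV[R]_n) :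
  (forall a, 0 <= lam a) -> \sum_a lam a = 1 -> (forall a, Conv D y0 (z a)) ->
  Conv D y0 (\sum_a lam a *: z a).
Proof.
move=> H0 H1 Hz; have [cf Hcf] := fin_all_exists Hz.
exists [ffun d => \sum_a lam a * cf a d]; split; [|split].
- move=> d; rewrite ffunE sumr_ge0 // => a _; rewrite mulr_ge0 //.
  by case: (Hcf a).
- rewrite (eq_bigr (fun d => \sum_a lam a * cf a d)); last by move=> d _; rewrite ffunE.
  rewrite exchange_big /= -[RHS]H1; apply: eq_bigr => a _.
  by rewrite -mulr_sumr; case: (Hcf a) => _ [-> _]; rewrite mulr1.
- rewrite (eq_bigr (fun d => \sum_a (lam a * cf a d) *: y0 d)); last first.
    by move=> d _; rewrite ffunE scaler_suml.
  rewrite [RHS]exchange_big /=; apply: eq_bigr => a _.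
  case: (Hcf a) => _ [_ ->]; rewrite scaler_sumr; apply: eq_bigr => d _.
  by rewrite scalerA.
Qed.

Lemma mulrow_entry (R : realFieldType) (n : nat) (x : 'rV[R]_n) (M : 'M[R]_n) j :
  (x *m M) 0 j = \sum_k x 0 k * M k j.
Proof. by rewrite mxE. Qed.

Lemma main_ind (R : realFieldType) (n A : nat) (Q : 'I_A -> 'M[R]_n)
  (O : 'I_n -> 'I_A -> bool) (y0 : {ffun {ffun 'I_n -> 'I_A} -> 'rV[R]_n}) :
  (0 < n)%N -> (forall a, generator (Q a)) ->
  (forall d, irreducible (Qpol Q (det_mx d))) ->
  (forall d, stat_dist Q d (y0 d)) ->
  forall N (pi : 'M[R]_(n, A)),
  (#|[set p : 'I_n * 'I_A | (0 < pi p.1 p.2)%R]| < N)%N ->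
  (forall i a, 0 <= pi i a) -> (forall i, \sum_a pi i a = 1) ->
  (forall i a, 0 < pi i a -> O i a) ->
  forall x, simplex x -> x *m Qpol Q pi = 0 ->
  Conv [set d : {ffun 'I_n -> 'I_A} | [forall i, O i (d i)]] y0 x.
Proof.
move=> Hn Hg Hirr Hy0; elim=> [|N IH] pi // HN H0 H1 HO x Hx HxQ.
set D := [set d : {ffun 'I_n -> 'I_A} | [forall i, O i (d i)]].
have HgP := @Qpol_gen R n A Q pi Hg H0.
have HiP := @Qpol_irr R n A Q pi Hg Hirr H0 (@row_pos R n A pi H0 H1).
have [d0 Hd0] : exists d0, d0 \in D.
  have [f Hf] := fin_all_exists (@row_pos R n A pi H0 H1).
  by exists (finfun f); rewrite inE; apply/forallP => i; rewrite ffunE; exact: HO (Hf i).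
case: (boolP [exists i, exists a, exists b, (a != b) && (0 < pi i a) && (0 < pi i b)]) => Hcase;
  last first.
  have H2 : forall i a b, 0 < pi i a -> 0 < pi i b -> a = b.
    move=> i a b Ha Hb; apply/eqP; apply: contraNT Hcase => Hab.
    apply/existsP; exists i; apply/existsP; exists a; apply/existsP; exists b.
    by rewrite Hab Ha Hb.
  have [f Hf] := fin_all_exists (@row_pos R n A pi H0 H1).
  pose d := finfun f.
  have Hpi : pi = det_mx d.
    apply/matrixP => i a; rewrite mxE ffunE.
    have Hz : forall b, b != f i -> pi i b = 0.
      move=> b Hb; apply/eqP; case: (boolP (pi i b == 0)) => // Hne.
      have Hbp : 0 < pi i b by rewrite lt_def Hne H0.
      by rewrite (H2 i b (f i) Hbp (Hf i)) eqxx in Hb.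
    case: (eqVneq a (f i)) => [->|Ha]; last by rewrite Hz.
    by rewrite -(H1 i) (bigD1 (f i)) //= big1 ?addr0 // => b Hb; exact: Hz.
  have Hd : d \in D by rewrite inE; apply/forallP => i; rewrite ffunE; exact: HO _ _ (Hf i).
  have -> : x = y0 d.
    have [Hs HyQ] := Hy0 d.
    rewrite Hpi in HgP HiP HxQ.
    exact: (@stat_uniq _ _ _ x (y0 d) HgP HiP Hx Hs HxQ HyQ).
  exact: conv_y0.
case/existsP: Hcase => i /existsP [a1 /existsP [b1 /andP [/andP [Hab Ha1] Hb1]]].
pose pi' (a : 'I_A) : 'M[R]_(n, A) :=
  \matrix_(k, c) if k == i then (c == a)%:R else pi k c.
have H0' : forall a k c, 0 <= pi' a k c.
  by move=> a k c; rewrite mxE; case: ifP => _; [rewrite ler0n | exact: H0].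
have H1' : forall a k, \sum_c pi' a k c = 1.
  move=> a k; case: (eqVneq k i) => [->|Hk].
    rewrite (bigD1 a) //= mxE !eqxx big1 ?addr0 // => c Hc.
    by rewrite mxE eqxx (negbTE Hc).
  by rewrite -(H1 k); apply: eq_bigr => c _; rewrite mxE (negbTE Hk).
have HO' : forall a, 0 < pi i a -> forall k c, 0 < pi' a k c -> O k c.
  move=> a Ha k c; rewrite mxE; case: (eqVneq k i) => [->|Hk] /=; last exact: HO.
  by case: (eqVneq c a) => [->|Hc] //=; [move=> _; exact: HO | rewrite ltxx].
have Hcard : forall a, 0 < pi i a ->
    (#|[set p : 'I_n * 'I_A | (0 < pi' a p.1 p.2)%R]| < #|[set p : 'I_n * 'I_A | (0 < pi p.1 p.2)%R]|)%N.
  move=> a Ha; apply: proper_card; apply/properP; split.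
    apply/subsetP => [[k c]]; rewrite !inE /= mxE; case: (eqVneq k i) => [->|Hk] //=.
    by case: (eqVneq c a) => [->|] //; rewrite ltxx.
  have [e He] : exists e, (e != a) && (0 < pi i e).
    case: (eqVneq a1 a) => [Ea|Ea]; last by exists a1; rewrite Ea Ha1.
    by exists b1; rewrite -Ea eq_sym Hab Hb1.
  case/andP: He => Hea Hep.
  by exists (i, e); rewrite inE /= ?Hep // mxE eqxx (negbTE Hea) ltxx.
have Hz : forall a, exists z : 'rV[R]_n,
    Conv D y0 z /\ simplex z /\ (0 < pi i a -> z *m Qpol Q (pi' a) = 0).
  move=> a; case: (boolP (0 < pi i a)) => Ha.
    have [z [Hzs HzQ]] := @stat_exists R n (Qpol Q (pi' a)) Hn
      (@Qpol_gen R n A Q (pi' a) Hg (H0' a)).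
    exists z; split; last by split.
    apply: (IH (pi' a)) => //; last exact: HO' a Ha.
    exact: leq_trans (Hcard a Ha) HN.
  exists (y0 d0); split; first exact: conv_y0.
  by split; [case: (Hy0 d0) | move=> H; case/negP: Ha].
have [z Hzp] := fin_all_exists Hz.
have Hzpos : forall a, 0 < pi i a -> 0 < z a 0 i.
  move=> a Ha; case: (Hzp a) => _ [Hs HzQ].
  apply: (@stat_pos_simplex _ _ (Qpol Q (pi' a)) (z a) _ _ Hs (HzQ Ha)).
    exact: (@Qpol_gen R n A Q (pi' a) Hg (H0' a)).
  apply: (@Qpol_irr R n A Q (pi' a) Hg Hirr (H0' a)).
  exact: (@row_pos R n A (pi' a) (H0' a) (H1' a)).
have Hzge : forall a k, 0 <= z a 0 k by move=> a k; case: (Hzp a) => _ [[Hs _] _].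
pose mu a := pi i a / z a 0 i.
pose s := \sum_a mu a.
have Hmu0 : forall a, 0 <= mu a by move=> a; rewrite divr_ge0.
have Hs0 : 0 < s.
  rewrite /s (bigD1 a1) //= -[X in X < _](addr0 0) ltr_leD ?sumr_ge0 //.
  by rewrite divr_gt0 // Hzpos.
pose lam a := s^-1 * mu a.
have Hlam0 : forall a, 0 <= lam a by move=> a; rewrite mulr_ge0 // invr_ge0 ltW.
have Hlam1 : \sum_a lam a = 1 by rewrite -mulr_sumr mulVf // gt_eqF.
have Hpi' : forall a k j, Qpol Q (pi' a) k j = if k == i then Q a i j else Qpol Q pi k j.
  move=> a k j; case: (eqVneq k i) => [->|Hk].
    rewrite mxE (bigD1 a) //= mxE !eqxx mulr1 big1 ?addr0 // => c Hc.
    by rewrite mxE eqxx (negbTE Hc) mulr0.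
  by rewrite !mxE; apply: eq_bigr => c _; rewrite mxE (negbTE Hk).
have Hmuz : forall a j, mu a * (z a *m Qpol Q pi) 0 j = pi i a * (Qpol Q pi i j - Q a i j).
  move=> a j; case: (boolP (0 < pi i a)) => Ha; last first.
    have E : pi i a = 0 by apply/eqP; rewrite eq_le H0 andbT leNgt Ha.
    by rewrite /mu E !mul0r.
  case: (Hzp a) => _ [_ HzQ]; have HzQa := HzQ Ha.
  have Hdiff : (z a *m Qpol Q pi) 0 j = z a 0 i * (Qpol Q pi i j - Q a i j).
    have E : (z a *m Qpol Q (pi' a)) 0 j = 0 by rewrite HzQa mxE.
    rewrite -[LHS]subr0 -E !mulrow_entry -sumrB (bigD1 i) //= big1 ?addr0.
      by rewrite Hpi' eqxx mulrBr.
    by move=> k Hk; rewrite Hpi' (negbTE Hk) subrr.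
  by rewrite Hdiff /mu mulrA divfK // gt_eqF // Hzpos.
have Hx' : x = \sum_a lam a *: z a.
  have Ent : forall j, (\sum_a lam a *: z a) 0 j = \sum_a lam a * z a 0 j.
    by move=> j; rewrite summxE; apply: eq_bigr => a _; rewrite mxE.
  apply: (@stat_uniq _ _ (Qpol Q pi) x _ HgP HiP Hx _ HxQ _).
    split.
      by move=> j; rewrite Ent sumr_ge0 // => a _; rewrite mulr_ge0.
    rewrite (eq_bigr _ (fun j _ => Ent j)) exchange_big /= -[RHS]Hlam1.
    apply: eq_bigr => a _; rewrite -mulr_sumr.
    by case: (Hzp a) => _ [[_ ->] _]; rewrite mulr1.
  rewrite mulmx_suml; apply/rowP => j; rewrite summxE [RHS]mxE.
  rewrite (eq_bigr (fun a => s^-1 * (pi i a * (Qpol Q pi i j - Q a i j)))); last first.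
    by move=> a _; rewrite -scalemxAl mxE /lam -mulrA Hmuz.
  rewrite -mulr_sumr (eq_bigr (fun a => Qpol Q pi i j * pi i a - pi i a * Q a i j)); last first.
    by move=> a _; rewrite mulrBr mulrC.
  rewrite sumrB -mulr_sumr H1 mulr1 [X in X - _]mxE.
  rewrite [X in _ - X](eq_bigr (fun a => Q a i j * pi i a)) ?subrr ?mulr0 //.
  by move=> a _; rewrite mulrC.
rewrite Hx'; apply: conv_comb => // a; by case: (Hzp a).
Qed.

Theorem mainTheorem8 (R : realFieldType) (S A : nat) (hS : (1 < S)%N) (hA : (0 < A)%N)
  (Q : 'rV[R]_S -> 'I_A -> 'M[R]_S) (r : 'rV[R]_S -> 'I_S -> 'I_A -> R) (beta : R)
  (hgen : forall m, simplex m -> forall a, generator (Q m a))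
  (hLip : exists L : R, forall m1 m2, simplex m1 -> simplex m2 ->
     forall a i j, `|Q m1 a i j - Q m2 a i j| <= L * \sum_k `|m1 0 k - m2 0 k|)
  (hcont : forall m0, simplex m0 -> forall eps : R, 0 < eps -> exists delta : R, 0 < delta /\
     forall m1, simplex m1 -> (forall k, `|m1 0 k - m0 0 k| < delta) ->
     forall i a, `|r m1 i a - r m0 i a| < eps)
  (hbeta : 0 < beta < 1)
  (m : 'rV[R]_S) (hm : simplex m)
  (hirr : forall d : {ffun 'I_S -> 'I_A}, irreducible (Qpol (Q m) (det_mx d)))
  (V : 'cV[R]_S) (hV : is_value_fn beta (Q m) (r m) V) :
  (forall d, d \in opt_dets (Q m) (r m) V -> exists! x, stat_dist (Q m) d x) /\
  (forall x : 'rV[R]_S, best_response (Q m) (r m) V x <->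
     exists (c : {ffun {ffun 'I_S -> 'I_A} -> R}) (y : {ffun {ffun 'I_S -> 'I_A} -> 'rV[R]_S}),
       (forall d, 0 <= c d) /\ \sum_(d in opt_dets (Q m) (r m) V) c d = 1 /\
       (forall d, d \in opt_dets (Q m) (r m) V -> stat_dist (Q m) d (y d)) /\
       x = \sum_(d in opt_dets (Q m) (r m) V) c d *: y d).
Proof.
have Hg : forall a, generator (Q m a) := hgen m hm.
have Hn : (0 < S)%N by apply: ltnW.
have Hdet0 : forall (d : {ffun 'I_S -> 'I_A}) k a, 0 <= @det_mx R S A d k a.
  by move=> d k a; rewrite mxE ler0n.
have HgD : forall d, generator (Qpol (Q m) (det_mx d)).
  by move=> d; apply: Qpol_gen.
have Hex : forall d, exists x, stat_dist (Q m) d x.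
  by move=> d; have [x Hx] := @stat_exists R S _ Hn (HgD d); exists x.
have Huniq : forall d x y, stat_dist (Q m) d x -> stat_dist (Q m) d y -> x = y.
  move=> d x y [Hx HxQ] [Hy HyQ].
  exact: (@stat_uniq R S _ x y (HgD d) (hirr d) Hx Hy HxQ HyQ).
split.
  move=> d _; have [x Hx] := Hex d; exists x; split; first exact: Hx.
  move=> y Hy; exact: (Huniq d).
have [y0 Hy0] := fin_all_exists Hex.
pose y0f := [ffun d => y0 d].
have Hy0f : forall d, stat_dist (Q m) d (y0f d) by move=> d; rewrite ffunE.
set O := opt_action (Q m) (r m) V.
have ED : opt_dets (Q m) (r m) V = [set d : {ffun 'I_S -> 'I_A} | [forall i, O i (d i)]] by [].
move=> x; split.
  move=> [Hx [pi [Hpi HxQ]]].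
  rewrite ED in Hpi; have [H0 [H1 HO]] := @conv_good R S A O pi Hpi.
  have := @main_ind R S A (Q m) O y0f Hn Hg hirr Hy0f _ pi (ltnSn _) H0 H1 HO x Hx HxQ.
  move=> [c [Hc [Hs Hx']]]; exists c, y0f; rewrite ED; do !split => //.
rewrite ED; set D := [set d : {ffun 'I_S -> 'I_A} | [forall i, O i (d i)]].
move=> [c [y [Hc [Hs [Hy ->]]]]].
rewrite /best_response ED -/D.
clear x; set x := \sum_(d in D) c d *: y d.
have Ent : forall k, x 0 k = \sum_(d in D) c d * y d 0 k.
  by move=> k; rewrite summxE; apply: eq_bigr => d _; rewrite mxE.
have Hyge : forall d k, d \in D -> 0 <= y d 0 k.
  by move=> d k Hd; case: (Hy d Hd) => [[H _] _].
have [d1 /andP [Hd1 Hc1]] : exists d1, (d1 \in D) && (0 < c d1).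
  case: (pickP (fun d => (d \in D) && (0 < c d))) => [d1 H|H]; first by exists d1.
  have : \sum_(d in D) c d <= 0.
    by rewrite sumr_le0 // => d Hd; have := H d; rewrite Hd /= => /negbT; rewrite -leNgt.
  by rewrite Hs ler10.
have Hxpos : forall k, 0 < x 0 k.
  move=> k; rewrite Ent (bigD1 d1) //= -[X in X < _](addr0 0) ltr_leD //.
    rewrite mulr_gt0 //; case: (Hy d1 Hd1) => Hs1 HQ1.
    exact: (@stat_pos_simplex R S _ _ (HgD d1) (hirr d1) Hs1 HQ1).
  by rewrite sumr_ge0 // => d /andP [Hd _]; rewrite mulr_ge0 ?Hyge.
have Hxs : simplex x.
  split; first by move=> k; apply: ltW.
  rewrite (eq_bigr _ (fun k _ => Ent k)) exchange_big /= -[RHS]Hs.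
  apply: eq_bigr => d Hd; rewrite -mulr_sumr.
  by case: (Hy d Hd) => [[_ ->] _]; rewrite mulr1.
split => //.
pose N k a := \sum_(d in D) c d * y d 0 k * (a == d k)%:R.
pose pi := \matrix_(k, a) (N k a / x 0 k).
have HN : forall k, \sum_a N k a = x 0 k.
  move=> k; rewrite Ent /N exchange_big /=; apply: eq_bigr => d _.
  rewrite -mulr_sumr (bigD1 (d k)) //= eqxx big1 ?addr0 ?mulr1 // => a Ha.
  by rewrite (negbTE Ha).
have HN0 : forall k a, 0 <= N k a.
  by move=> k a; rewrite sumr_ge0 // => d Hd; rewrite !mulr_ge0 ?Hyge ?ler0n.
exists pi; split.
  apply: conv_prod.
  - by move=> k a; rewrite mxE divr_ge0 // ltW.
  - move=> k; rewrite (eq_bigr (fun a => N k a / x 0 k)); last by move=> a _; rewrite mxE.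
    by rewrite -mulr_suml HN mulfV // gt_eqF.
  - move=> k a; rewrite mxE; case: (boolP (O k a)) => // Ha.
    rewrite /N big1 ?mul0r ?ltxx // => d; rewrite inE => /forallP /(_ k) Hd.
    by case: eqP => [E|]; [rewrite E Hd in Ha | rewrite mulr0].
apply/rowP => j; rewrite mulrow_entry [RHS]mxE.
have Hk : forall k, x 0 k * Qpol (Q m) pi k j
    = \sum_(d in D) c d * (y d 0 k * Qpol (Q m) (det_mx d) k j).
  move=> k; rewrite mxE mulr_sumr.
  rewrite (eq_bigr (fun a => \sum_(d in D) Q m a k j * (c d * y d 0 k * (a == d k)%:R)));
    last first.
    by move=> a _; rewrite mxE mulrCA [x 0 k * _]mulrC divfK ?gt_eqF // /N mulr_sumr.
  rewrite exchange_big /=; apply: eq_bigr => d _.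
  rewrite Qpol_det (bigD1 (d k)) //= eqxx mulr1 big1 ?addr0; last first.
    by move=> a Ha; rewrite (negbTE Ha) !mulr0.
  by rewrite mulrC -mulrA.
rewrite (eq_bigr _ (fun k _ => Hk k)) exchange_big /= big1 // => d Hd.
rewrite -mulr_sumr; case: (Hy d Hd) => _ HQ.
have : (y d *m Qpol (Q m) (det_mx d)) 0 j = 0 by rewrite HQ mxE.
by rewrite mulrow_entry => ->; rewrite mulr0.
Qed.
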